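(* For all $\lambda\in[0,1]$ and $\Delta_1,\Delta_2\in[0,\frac12]$, $C_{\mathrm{SKL}}((\mathrm{BSC}_{\Delta_1}\times\mathrm{BSC}_{\Delta_2})\circ B_{3,\lambda})\le\lambda^2\big(C_{\mathrm{SKL}}(\mathrm{BSC}_{\Delta_1})+C_{\mathrm{SKL}}(\mathrm{BSC}_{\Delta_2})\big)$, and the inequality is strict when $0<\lambda<1$ and $\min\{\Delta_1,\Delta_2\}<\frac12$.
   Context: $\mathrm{BSC}_\Delta:\{\pm\}\to\{\pm\}$ flips the input with probability $\Delta$. $B_{3,\lambda}:\{\pm\}\to\{\pm\}^2$ is the kernel $B_{3,\lambda}(x_1,x_2|y)=\lambda+\frac14(1-\lambda)$ if $x_1=x_2=y$ and $\frac14(1-\lambda)$ otherwise. $\times$ is the tensor product of channels. For a binary-input channel $P$, $C_{\mathrm{SKL}}(P)$ is the SKL information ($f$-information with $f(x)=(x-1)\log x$) between $X\sim\mathrm{Unif}(\{\pm\})$ and the output of $P$; in particular $C_{\mathrm{SKL}}(\mathrm{BSC}_\Delta)=\theta\,\mathrm{arctanh}\,\theta$ with $\theta=1-2\Delta$ (with value $+\infty$ at $\Delta=0$). *)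

(* Defs.v *)
From mathcomp Require Import all_boot all_order all_algebra.
From mathcomp Require Import all_classical all_reals.
From mathcomp Require Import ereal exp.
Set Implicit Arguments. Unset Strict Implicit. Unset Printing Implicit Defensive.
Import Order.TTheory GRing.Theory Num.Theory.
Local Open Scope ring_scope.

(* Binary alphabet {+,-} is encoded as bool (true = +, false = -).
   A channel (Markov kernel) W : A -> B -> R, W a b = P(output b | input a). *)

Section Channels.
Variable R : realType.

Definition BSC (D : R) : bool -> bool -> R :=
  fun x z => if z == x then 1 - D else D.

Definition B3 (l : R) : bool -> bool * bool -> R :=
  fun y x => if (x.1 == y) && (x.2 == y) then l + (1 - l) / 4 else (1 - l) / 4.

Definition chan_prod (A1 B1 A2 B2 : finType)
  (V1 : A1 -> B1 -> R) (V2 : A2 -> B2 -> R) : A1 * A2 -> B1 * B2 -> R :=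
  fun a b => V1 a.1 b.1 * V2 a.2 b.2.

Definition chan_comp (A B C : finType) (V : B -> C -> R) (U : A -> B -> R)
  : A -> C -> R :=
  fun a c => \sum_(b : B) U a b * V b c.

(* The term q f(p/q) with f(t) = (t-1) log t, with the usual conventions
   0 f(0/0) = 0, q f(0/q) = +oo (q>0), 0 f(p/0) = p f'(oo) = +oo (p>0). *)
Definition skl_term (p q : R) : \bar R :=
  if (p == 0) && (q == 0) then 0%E
  else if (p == 0) || (q == 0) then +oo%E
  else ((p - q) * ln (p / q))%:E.

(* SKL information between X ~ Unif{+-} and the output Y of W:
   D_f(P_{XY} || P_X x P_Y) with f(t) = (t-1) log t. *)
Definition C_SKL (Y : finType) (W : bool -> Y -> R) : \bar R :=
  (\sum_(x : bool) \sum_(y : Y)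
     skl_term (W x y / 2) ((1 / 2) * ((W true y + W false y) / 2)))%E.

End Channels.

(* Main.v *)
Require Import Defs.
From mathcomp Require Import all_boot all_order all_algebra.
From mathcomp Require Import all_classical all_reals.
From mathcomp Require Import ereal exp.
From mathcomp Require Import topology normedtype derive realfun.
From mathcomp Require Import ring lra.
Import Order.TTheory GRing.Theory Num.Theory numFieldNormedType.Exports.
Local Open Scope ring_scope.

Lemma is_derive_lnaff (R : realType) (al be x : R) : 0 < al + be * x ->
  is_derive x 1 (fun t => ln (al + be * t)) (be / (al + be * x)).
Proof.
move=> hp.
have hf : is_derive x 1 (fun t : R => al + be * t) be.
  have -> : (fun t : R => al + be * t) = (cst al + (fun t => be *: t))%R.
    by apply/funext => t.
  rewrite -[X in is_derive _ _ _ X]add0r.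
  apply: is_deriveD.
  rewrite -[X in is_derive _ _ _ X]mulr1.
  exact: is_deriveZ.
have hg : is_derive (al + be * x) 1 (@ln R) (al + be * x)^-1 by exact: is_derive1_ln.
apply: DeriveDef.
  have -> : (fun t => ln (al + be * t)) = (@ln R) \o (fun t => al + be * t) by [].
  apply/derivable1_diffP; apply: differentiable_comp.
    by apply/derivable1_diffP; exact: (@ex_derive _ _ _ _ _ _ _ hf).
  by apply/derivable1_diffP; exact: (@ex_derive _ _ _ _ _ _ _ hg).
have := @derive1_comp R (fun t => al + be * t) (@ln R) x (@ex_derive _ _ _ _ _ _ _ hf) (@ex_derive _ _ _ _ _ _ _ hg).
rewrite !derive1E /= => ->.
rewrite (@derive_val _ _ _ _ _ _ _ hf) (@derive_val _ _ _ _ _ _ _ hg).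
by rewrite mulrC.
Qed.

Section Key.
Variable R : realType.
Definition Lf (al be : R) : R -> R := fun t => ln (al + be * t).

Definition hF (l b : R) : R -> R :=
  (2 * l) *: (Lf 1 1 - Lf 1 (-1)) -
  (Lf (1 + l * b) (l * (1 + b)) - Lf (1 - l * b) (- (l * (1 - b)))
   + Lf (1 - l * b) (l * (1 - b)) - Lf (1 + l * b) (- (l * (1 + b)))).

Definition hdF (l b t : R) : R :=
  (2 * l) *: (1 / (1 + 1 * t) - (-1) / (1 + (-1) * t)) -
  (l * (1 + b) / (1 + l * b + l * (1 + b) * t) - (- (l * (1 - b))) / (1 - l * b + (- (l * (1 - b))) * t)
   + l * (1 - b) / (1 - l * b + l * (1 - b) * t) - (- (l * (1 + b))) / (1 + l * b + (- (l * (1 + b))) * t)).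

Lemma hF_derive (l b t : R) :
  0 < 1 + 1 * t -> 0 < 1 + (-1) * t ->
  0 < 1 + l * b + l * (1 + b) * t -> 0 < 1 - l * b + (- (l * (1 - b))) * t ->
  0 < 1 - l * b + l * (1 - b) * t -> 0 < 1 + l * b + (- (l * (1 + b))) * t ->
  is_derive t 1 (hF l b) (hdF l b t).
Proof.
move=> h1 h2 h3 h4 h5 h6.
rewrite /hF /hdF.
apply: is_deriveB; first apply: is_deriveZ; first apply: is_deriveB.
- exact: is_derive_lnaff.
- exact: is_derive_lnaff.
apply: is_deriveB; first apply: is_deriveD; first apply: is_deriveB.
all: exact: is_derive_lnaff.
Qed.

Lemma hFE (l b t : R) : hF l b t =
  2 * l * (ln (1 + 1 * t) - ln (1 + (-1) * t)) -
  (ln (1 + l * b + l * (1 + b) * t) - ln (1 - l * b + (- (l * (1 - b))) * t)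
   + ln (1 - l * b + l * (1 - b) * t) - ln (1 + l * b + (- (l * (1 + b))) * t)).
Proof. by []. Qed.

Lemma hF0 (l b : R) : hF l b 0 = 0.
Proof.
rewrite hFE !mulr0 !addr0 subrr mulr0 sub0r.
by rewrite subrK subrr oppr0.
Qed.

Lemma pos_mix (l P : R) : 0 <= l <= 1 -> 0 < P -> 0 < (1 - l) + l * P.
Proof.
move=> /andP[l0 l1] P0.
have [->|lpos] := eqVneq l 0; first by rewrite subr0 mul0r addr0.
have : 0 < l by rewrite lt_def lpos l0.
move=> lp; apply: (@lt_le_trans _ _ (l * P)); first exact: mulr_gt0.
by rewrite lerDr subr_ge0.
Qed.

Definition Pdec (l b s : R) :=
  (1 - s) * (2 * l * b^+2 * (1 - l) * (1 - l^+2 * b^+2))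
     + s * (2 * (1 - l)^+2 * (1 + l + 2 * l * b) * (1 + l - 2 * l * b))
     + s * (1 - s) * (2 * (1 - b^+2) * l^+2 * (1 - l * b^+2 - l^+2 * (1 - b^+2))).


Lemma Pdec_parts (l b s : R) : 0 <= l <= 1 -> 0 <= b <= 1 -> 0 <= s <= 1 ->
  [/\ 0 <= (1 - s) * (2 * l * b^+2 * (1 - l) * (1 - l^+2 * b^+2)),
      0 <= s * (2 * (1 - l)^+2 * (1 + l + 2 * l * b) * (1 + l - 2 * l * b)),
      (0 < s -> l < 1 -> 0 < s * (2 * (1 - l)^+2 * (1 + l + 2 * l * b) * (1 + l - 2 * l * b)))
    & 0 <= s * (1 - s) * (2 * (1 - b^+2) * l^+2 * (1 - l * b^+2 - l^+2 * (1 - b^+2)))].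
Proof.
move=> /andP[l0 l1] /andP[b0 b1] /andP[s0 s1].
have e1 : 0 <= l - l^+2 by nra.
have e2 : 0 <= 1 - b^+2 by nra.
have e3 := mulr_ge0 e1 e2.
have e4 : 0 <= l * b^+2 by nra.
have hq : 0 <= 1 - l * b^+2 - l^+2 * (1 - b^+2) by nra.
have hA : 0 <= 1 + l - 2 * l * b by nra.
have hB : 0 <= 1 - l^+2 * b^+2 by nra.
split.
- apply: mulr_ge0; first by lra.
  apply: mulr_ge0 => //; apply: mulr_ge0; last by lra.
  by apply: mulr_ge0; [lra| exact: sqr_ge0].
- apply: mulr_ge0 => //; apply: mulr_ge0 => //; apply: mulr_ge0; last by nra.
  by apply: mulr_ge0; [lra| exact: sqr_ge0].
- move=> sp lp.
  have f1 : 0 < 1 + l - 2 * l * b by nra.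
  have f2 : 0 < 1 + l + 2 * l * b by nra.
  have f3 : 0 < (1 - l)^+2 by rewrite exprn_gt0 // subr_gt0.
  by apply: mulr_gt0 => //; apply: mulr_gt0 => //; apply: mulr_gt0 => //; apply: mulr_gt0.
- apply: mulr_ge0; first by apply: mulr_ge0; lra.
  apply: mulr_ge0 => //; apply: mulr_ge0; last exact: sqr_ge0.
  by apply: mulr_ge0; nra.
Qed.

Lemma Pdec_ge0 (l b s : R) : 0 <= l <= 1 -> 0 <= b <= 1 -> 0 <= s <= 1 ->
  0 <= Pdec l b s.
Proof.
move=> hl hb hs; have [t1 t2 _ t3] := @Pdec_parts l b s hl hb hs.
rewrite /Pdec; lra.
Qed.

Lemma Pdec_gt0 (l b s : R) : 0 <= l < 1 -> 0 <= b <= 1 -> 0 < s <= 1 ->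
  0 < Pdec l b s.
Proof.
move=> /andP[l0 l1] hb /andP[s0 s1].
have hl : 0 <= l <= 1 by rewrite l0 ltW.
have hs : 0 <= s <= 1 by rewrite ltW // s1.
have [t1 _ t2 t3] := @Pdec_parts l b s hl hb hs.
have := t2 s0 l1.
rewrite /Pdec; lra.
Qed.

Lemma hdF_eq (l b t : R) :
  1 + 1 * t != 0 -> 1 + (-1) * t != 0 ->
  1 + l * b + l * (1 + b) * t != 0 -> 1 - l * b + (- (l * (1 - b))) * t != 0 ->
  1 - l * b + l * (1 - b) * t != 0 -> 1 + l * b + (- (l * (1 + b))) * t != 0 ->
  hdF l b t = 2 * l * Pdec l b (t^+2) /
    ((1 + 1 * t) * (1 + (-1) * t) * ((1 + l * b + l * (1 + b) * t) * (1 + l * b + (- (l * (1 + b))) * t))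
       * ((1 - l * b + (- (l * (1 - b))) * t) * (1 - l * b + l * (1 - b) * t))).
Proof.
move=> h1 h2 h3 h4 h5 h6.
rewrite /hdF /Pdec.
have sc : forall x y : R, x *: y = x * y by [].
rewrite sc.
field.
by move: h1; rewrite mul1r => h1; rewrite h1 h2 h3 h4 h5 h6.
Qed.


Lemma dens_pos (l b t : R) : 0 <= l <= 1 -> 0 <= b < 1 -> 0 <= t < 1 ->
  [/\ 0 < 1 + 1 * t, 0 < 1 + (-1) * t,
      0 < 1 + l * b + l * (1 + b) * t, 0 < 1 - l * b + (- (l * (1 - b))) * t
      & 0 < 1 - l * b + l * (1 - b) * t /\ 0 < 1 + l * b + (- (l * (1 + b))) * t].
Proof.
move=> hl /andP[b0 b1] /andP[t0 t1].
split; first by lra.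
- by lra.
- rewrite (_ : _ + _ = (1 - l) + l * ((1 + b) * (1 + t))); last by ring.
  by apply: pos_mix => //; apply: mulr_gt0; lra.
- rewrite (_ : _ + _ = (1 - l) + l * ((1 - b) * (1 - t))); last by ring.
  by apply: pos_mix => //; apply: mulr_gt0; lra.
split.
- rewrite (_ : _ + _ = (1 - l) + l * ((1 - b) * (1 + t))); last by ring.
  by apply: pos_mix => //; apply: mulr_gt0; lra.
- rewrite (_ : _ + _ = (1 - l) + l * ((1 + b) * (1 - t))); last by ring.
  by apply: pos_mix => //; apply: mulr_gt0; lra.
Qed.

Lemma hdF_sign (l b t : R) : 0 <= l <= 1 -> 0 <= b < 1 -> 0 <= t < 1 ->
  0 <= hdF l b t /\ (0 < l < 1 -> 0 < t -> 0 < hdF l b t).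
Proof.
move=> hl hb ht.
have [d1 d2 d3 d4 [d5 d6]] := @dens_pos l b t hl hb ht.
rewrite hdF_eq ?gt_eqF //.
have hden : 0 < (1 + 1 * t) * (1 + (-1) * t) * ((1 + l * b + l * (1 + b) * t) * (1 + l * b + (- (l * (1 + b))) * t))
       * ((1 - l * b + (- (l * (1 - b))) * t) * (1 - l * b + l * (1 - b) * t)).
  by rewrite !mulr_gt0.
have hb' : 0 <= b <= 1 by case/andP: hb => -> /ltW ->.
have hs : 0 <= t^+2 <= 1.
  case/andP: ht => t0 t1; rewrite sqr_ge0 /=; nra.
case/andP: (hl) => l0 l1.
split.
  apply: divr_ge0; last exact: ltW.
  by apply: mulr_ge0; [lra | exact: Pdec_ge0].
move=> /andP[lp l1'] tp.
apply: divr_gt0 => //; apply: mulr_gt0; first by lra.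
apply: Pdec_gt0 => //; first by rewrite ltW.
case/andP: hs => _ ->; rewrite andbT exprn_gt0 //.
Qed.

Lemma key_ineq (l a b : R) : 0 <= l <= 1 -> 0 <= a < 1 -> 0 <= b < 1 ->
  0 <= hF l b a /\ (0 < l < 1 -> 0 < a -> 0 < hF l b a).
Proof.
move=> hl ha hb.
case/andP: (ha) => a0 a1.
have [a00|apos] := eqVneq a 0.
  by rewrite a00 hF0; split => // _; rewrite ltxx.
have ap : 0 < a by rewrite lt_def apos a0.
have der : forall x, 0 <= x <= a -> is_derive x 1 (hF l b) (hdF l b x).
  move=> x /andP[x0 xa].
  have hx : 0 <= x < 1 by rewrite x0 (le_lt_trans xa a1).
  have [d1 d2 d3 d4 [d5 d6]] := @dens_pos l b x hl hb hx.
  exact: hF_derive.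
have [c cin eq] : exists2 c, c \in `]0, a[ & hF l b a - hF l b 0 = hdF l b c * (a - 0).
  apply: MVT => //.
    move=> x; rewrite in_itv /= => /andP[x0 xa].
    by apply: der; rewrite !ltW.
  apply: derivable_within_continuous => x; rewrite in_itv /= => hx.
  exact: (@ex_derive _ _ _ _ _ _ _ (der x hx)).
move: eq; rewrite hF0 !subr0 => ->.
move: cin; rewrite in_itv /= => /andP[c0 ca].
have hc : 0 <= c < 1 by rewrite ltW // (lt_trans ca a1).
have [s1 s2] := @hdF_sign l b c hl hb hc.
split; first by apply: mulr_ge0; [exact: s1 | exact: ltW].
by move=> hl' _; apply: mulr_gt0 => //; exact: s2.
Qed.
End Key.

Section Chan.
Variable R : realType.

Lemma skl_pos (p q : R) : 0 < p -> 0 < q -> skl_term p q = ((p - q) * ln (p / q))%:E.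
Proof.
by move=> hp hq; rewrite /skl_term !gt_eqF.
Qed.

Lemma pair_term (u v : R) : 0 < u -> 0 < v ->
  (u / 2 - (1/2) * ((u + v) / 2)) * ln ((u / 2) / ((1/2) * ((u + v) / 2))) +
  (v / 2 - (1/2) * ((u + v) / 2)) * ln ((v / 2) / ((1/2) * ((u + v) / 2))) =
  (u - v) * (ln u - ln v) / 4.
Proof.
move=> hu hv.
have hm : 0 < (u + v) / 2 by apply: divr_gt0 => //; apply: addr_gt0.
rewrite (_ : (u / 2) / ((1/2) * ((u + v) / 2)) = u / ((u + v) / 2)); last first.
  by field; rewrite gt_eqF // addr_gt0.
rewrite (_ : (v / 2) / ((1/2) * ((u + v) / 2)) = v / ((u + v) / 2)); last first.
  by field; rewrite gt_eqF // addr_gt0.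
rewrite !ln_div ?posrE //.
by field.
all: by rewrite addr_gt0.
Qed.

Lemma C_SKL_fin (Y : finType) (W : bool -> Y -> R) : (forall x y, 0 < W x y) ->
  C_SKL W = (\sum_(y : Y) (W true y - W false y) * (ln (W true y) - ln (W false y)) / 4)%:E.
Proof.
move=> hW.
rewrite /C_SKL big_bool /=.
have hq : forall y, 0 < (1/2) * ((W true y + W false y) / 2).
  by move=> y; rewrite mulr_gt0 // divr_gt0 // addr_gt0.
rewrite (eq_bigr (fun y => ((W true y / 2 - (1/2) * ((W true y + W false y) / 2)) *
   ln ((W true y / 2) / ((1/2) * ((W true y + W false y) / 2))))%:E)); last first.
  by move=> y _; rewrite skl_pos // divr_gt0.
rewrite [X in (_ + X)%E](eq_bigr (fun y => ((W false y / 2 - (1/2) * ((W true y + W false y) / 2)) *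
   ln ((W false y / 2) / ((1/2) * ((W true y + W false y) / 2))))%:E)); last first.
  by move=> y _; rewrite skl_pos // divr_gt0.
rewrite !sumEFin -EFinD -big_split /=.
congr (_%:E); apply: eq_bigr => y _.
exact: pair_term.
Qed.


Lemma BSC_pos (a : R) : 0 <= a < 1 -> forall x y, 0 < BSC ((1 - a) / 2) x y.
Proof.
move=> /andP[a0 a1] x y; rewrite /BSC; case: (y == x); lra.
Qed.

Lemma C_SKL_BSC (a : R) : 0 <= a < 1 ->
  C_SKL (BSC ((1 - a) / 2)) = (a / 2 * (ln (1 + a) - ln (1 - a)))%:E.
Proof.
move=> ha; rewrite C_SKL_fin; last exact: BSC_pos.
case/andP: ha => a0 a1.
rewrite big_bool /BSC /=.
rewrite (_ : 1 - (1 - a) / 2 = (1 + a) / 2); last by field.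
congr (_%:E).
rewrite !ln_div ?posrE; try lra.
Qed.

Lemma sum_pair_bool (F : bool * bool -> R) :
  \sum_(p : bool * bool) F p = F (true, true) + F (true, false) + (F (false, true) + F (false, false)).
Proof.
rewrite (eq_bigr (fun p => F (p.1, p.2))); last by case.
by rewrite -(pair_bigA _ (fun i j => F (i, j))) /= !big_bool.
Qed.

Lemma esum_pair_bool (F : bool * bool -> \bar R) :
  (\sum_(p : bool * bool) F p = F (true, true) + F (true, false) + (F (false, true) + F (false, false)))%E.
Proof.
rewrite (eq_bigr (fun p => F (p.1, p.2))); last by case.
by rewrite -(pair_bigA _ (fun i j => F (i, j))) /= !big_bool.
Qed.

Definition sg (c : bool) : R := if c then 1 else -1.
Definition Kf (l a b e1 e2 : R) := 1 + l * a * e1 + l * b * e2 + l * a * b * (e1 * e2).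

Lemma Wc_val (l a b : R) y z :
  chan_comp (chan_prod (BSC ((1 - a) / 2)) (BSC ((1 - b) / 2))) (B3 l) y z =
  (1 + l * a * sg (z.1 == y) + l * b * sg (z.2 == y) + l * a * b * (sg (z.1 == y) * sg (z.2 == y))) / 4.
Proof.
rewrite /chan_comp sum_pair_bool /B3 /chan_prod /BSC /sg /=.
by case: y; case: z => [[] []] /=; field.
Qed.

Lemma pos_mix2 (l P : R) : 0 <= l <= 1 -> 0 <= P -> (l < 1 \/ 0 < P) -> 0 < (1 - l) + l * P.
Proof.
move=> /andP[l0 l1] P0 [lt1|Pp].
  by apply: (@lt_le_trans _ _ (1 - l)); [lra | rewrite lerDl mulr_ge0].
have [->|lpos] := eqVneq l 0; first by rewrite subr0 mul0r addr0.
have lp : 0 < l by rewrite lt_def lpos l0.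
apply: (@lt_le_trans _ _ (l * P)); first exact: mulr_gt0.
by rewrite lerDr subr_ge0.
Qed.

Lemma Kf_pos (l a b : R) (c1 c2 : bool) : 0 <= l <= 1 -> 0 <= a <= 1 -> 0 <= b <= 1 ->
  (l < 1 \/ (a < 1 /\ b < 1)) -> 0 < Kf l a b (sg c1) (sg c2).
Proof.
move=> hl /andP[a0 a1] /andP[b0 b1] hc.
rewrite (_ : Kf _ _ _ _ _ = (1 - l) + l * ((1 + a * sg c1) * (1 + b * sg c2))); last first.
  by rewrite /Kf; ring.
apply: pos_mix2 => //.
  by case: c1; case: c2; rewrite /sg; apply: mulr_ge0; lra.
case: hc => [h|[h1 h2]]; [by left | right].
by case: c1; case: c2; rewrite /sg; apply: mulr_gt0; lra.
Qed.

Lemma Wc_pos (l a b : R) : 0 <= l <= 1 -> 0 <= a <= 1 -> 0 <= b <= 1 ->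
  (l < 1 \/ (a < 1 /\ b < 1)) -> forall y z,
  0 < chan_comp (chan_prod (BSC ((1 - a) / 2)) (BSC ((1 - b) / 2))) (B3 l) y z.
Proof.
move=> hl ha hb hc y z; rewrite Wc_val.
have := @Kf_pos l a b (z.1 == y) (z.2 == y) hl ha hb hc; rewrite /Kf => h.
by apply: divr_gt0.
Qed.

Lemma lnWc (l a b : R) y z : 0 <= l <= 1 -> 0 <= a <= 1 -> 0 <= b <= 1 ->
  (l < 1 \/ (a < 1 /\ b < 1)) ->
  ln (chan_comp (chan_prod (BSC ((1 - a) / 2)) (BSC ((1 - b) / 2))) (B3 l) y z) =
  ln (Kf l a b (sg (z.1 == y)) (sg (z.2 == y))) - ln 4.
Proof.
move=> hl ha hb hc; rewrite Wc_val.
have := @Kf_pos l a b (z.1 == y) (z.2 == y) hl ha hb hc; rewrite /Kf => h.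
by rewrite ln_div ?posrE.
Qed.

Lemma LHS_val (l a b : R) : 0 <= l <= 1 -> 0 <= a <= 1 -> 0 <= b <= 1 ->
  (l < 1 \/ (a < 1 /\ b < 1)) ->
  C_SKL (chan_comp (chan_prod (BSC ((1 - a) / 2)) (BSC ((1 - b) / 2))) (B3 l)) =
  (l / 4 * ((a + b) * (ln (Kf l a b 1 1) - ln (Kf l a b (-1) (-1)))
          + (a - b) * (ln (Kf l a b 1 (-1)) - ln (Kf l a b (-1) 1))))%:E.
Proof.
move=> hl ha hb hc.
rewrite C_SKL_fin; last exact: Wc_pos.
congr (_%:E).
rewrite sum_pair_bool.
rewrite !lnWc //.
rewrite !Wc_val /sg /=.
by field.
Qed.

Lemma skl_ge0 (p q : R) : 0 <= p -> 0 <= q -> (0 <= skl_term p q)%E.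
Proof.
move=> p0 q0; rewrite /skl_term.
case: ifP => // _; case: ifP => [_|]; first by rewrite leey.
move=> /negbT; rewrite negb_or => /andP[pn qn].
have pp : 0 < p by rewrite lt_def pn p0.
have qp : 0 < q by rewrite lt_def qn q0.
rewrite lee_fin.
have [pq|qp'] := lerP p q.
  apply: mulr_le0; first by rewrite subr_le0.
  by apply: ln_le0; rewrite ler_pdivrMr // mul1r.
apply: mulr_ge0; first by rewrite subr_ge0 ltW.
by apply: ln_ge0; rewrite ler_pdivlMr // mul1r ltW.
Qed.

Lemma C_SKL_BSC_ge0 (D : R) : 0 <= D <= 1 / 2 -> (0 <= C_SKL (BSC D))%E.
Proof.
move=> /andP[d0 d1].
have hW : forall x y, 0 <= BSC D x y by move=> x y; rewrite /BSC; case: (y == x); lra.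
rewrite /C_SKL; apply: sume_ge0 => x _; apply: sume_ge0 => y _.
apply: skl_ge0; first by apply: divr_ge0.
by apply: mulr_ge0 => //; apply: divr_ge0 => //; apply: addr_ge0.
Qed.

Lemma skl_ninf (p q : R) : skl_term p q != -oo%E.
Proof. by rewrite /skl_term; case: ifP => //; case: ifP. Qed.

Lemma C_SKL_BSC0 : C_SKL (BSC (0 : R)) = +oo%E.
Proof.
rewrite /C_SKL !big_bool /BSC /=.
have h1 : skl_term ((0 : R) / 2) (1 / 2 * (((0 : R) + (1 - 0)) / 2)) = +oo%E.
  rewrite /skl_term mul0r eqxx /=.
  have -> : (1 / 2 * (((0 : R) + (1 - 0)) / 2) == 0) = false.
    by apply/negbTE; rewrite gt_eqF //; lra.
  by [].
have h2 : skl_term ((0 : R) / 2) (1 / 2 * (((1 : R) - 0 + 0) / 2)) = +oo%E.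
  rewrite /skl_term mul0r eqxx /=.
  have -> : (1 / 2 * (((1 : R) - 0 + 0) / 2) == 0) = false.
    by apply/negbTE; rewrite gt_eqF //; lra.
  by [].
rewrite h1 h2 addey ?skl_ninf // addye //.
by rewrite addye ?skl_ninf.
Qed.

End Chan.

Arguments hF {R}.
Arguments hdF {R}.
Arguments hFE {R}.
Arguments Lf {R}.
Arguments Kf {R}.
Arguments sg {R}.
Arguments key_ineq {R}.
Arguments LHS_val {R}.
Arguments C_SKL_BSC {R}.
Arguments C_SKL_BSC0 {R}.
Arguments C_SKL_BSC_ge0 {R}.
Arguments hF0 {R}.

Lemma hF_Kf (R : realType) (l a b : R) : hF l b a =
  2 * l * (ln (1 + a) - ln (1 - a)) -
  (ln (Kf l a b 1 1) - ln (Kf l a b (-1) (-1)) + ln (Kf l a b 1 (-1)) - ln (Kf l a b (-1) 1)).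
Proof.
rewrite hFE /Kf.
congr (_ * (ln _ - ln _) - (ln _ - ln _ + ln _ - ln _)); ring.
Qed.

Lemma hF_Kf' (R : realType) (l a b : R) : hF l a b =
  2 * l * (ln (1 + b) - ln (1 - b)) -
  (ln (Kf l a b 1 1) - ln (Kf l a b (-1) (-1)) + ln (Kf l a b (-1) 1) - ln (Kf l a b 1 (-1))).
Proof.
rewrite hFE /Kf.
congr (_ * (ln _ - ln _) - (ln _ - ln _ + ln _ - ln _)); ring.
Qed.

Lemma ge0_ninf (R : realType) (x : \bar R) : (0 <= x)%E -> x != -oo%E.
Proof. by case: x. Qed.

Theorem mainTheorem9 (R : realType) (l D1 D2 : R) :
  0 <= l <= 1 -> 0 <= D1 <= 1 / 2 -> 0 <= D2 <= 1 / 2 ->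
  (C_SKL (chan_comp (chan_prod (BSC D1) (BSC D2)) (B3 l))
     <= (l ^+ 2)%:E * (C_SKL (BSC D1) + C_SKL (BSC D2)))%E /\
  (0 < l < 1 -> Num.min D1 D2 < 1 / 2 ->
   (C_SKL (chan_comp (chan_prod (BSC D1) (BSC D2)) (B3 l))
     < (l ^+ 2)%:E * (C_SKL (BSC D1) + C_SKL (BSC D2)))%E).
Proof.
move=> hl hD1 hD2.
have [a ea] : exists a : R, D1 = (1 - a) / 2 by exists (1 - 2 * D1); field.
have [b eb] : exists b : R, D2 = (1 - b) / 2 by exists (1 - 2 * D2); field.
subst D1 D2.
have ha : 0 <= a <= 1 by case/andP: hD1 => h1 h2; apply/andP; split; lra.
have hb : 0 <= b <= 1 by case/andP: hD2 => h1 h2; apply/andP; split; lra.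
case/andP: (hl) => l0 l1; case/andP: (ha) => a0 a1; case/andP: (hb) => b0 b1.
rewrite gt_min.
case: (boolP ((a < 1) && (b < 1))) => [/andP[a1' b1'] | hab].
- rewrite LHS_val //; last by right.
  rewrite !C_SKL_BSC ?a0 ?b0 //.
  rewrite -EFinD -EFinM lee_fin lte_fin.
  have ha' : 0 <= a < 1 by rewrite a0.
  have hb' : 0 <= b < 1 by rewrite b0.
  have [k1 k1s] := key_ineq l a b hl ha' hb'.
  have [k2 k2s] := key_ineq l b a hl hb' ha'.
  have E : l ^+ 2 * (a / 2 * (ln (1 + a) - ln (1 - a)) + b / 2 * (ln (1 + b) - ln (1 - b))) -
     l / 4 * ((a + b) * (ln (Kf l a b 1 1) - ln (Kf l a b (-1) (-1)))
          + (a - b) * (ln (Kf l a b 1 (-1)) - ln (Kf l a b (-1) 1)))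
     = l / 4 * (a * hF l b a + b * hF l a b).
    by rewrite hF_Kf hF_Kf'; field.
  split.
    rewrite -subr_ge0 E; apply: mulr_ge0; first by apply: divr_ge0.
    by apply: addr_ge0; apply: mulr_ge0.
  move=> /andP[lp lt1] hmin.
  rewrite -subr_gt0 E; apply: mulr_gt0; first by apply: divr_gt0.
  have t1 : 0 <= a * hF l b a by apply: mulr_ge0.
  have t2 : 0 <= b * hF l a b by apply: mulr_ge0.
  have lab : 0 < l < 1 by rewrite lp lt1.
  have : (1 - a) / 2 < 1 / 2 \/ (1 - b) / 2 < 1 / 2 by apply/orP.
  case=> h.
    have ap : 0 < a by lra.
    have := mulr_gt0 ap (k1s lab ap); lra.
  have bp : 0 < b by lra.
  have := mulr_gt0 bp (k2s lab bp); lra.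
- have Hinf : (C_SKL (BSC ((1 - a) / 2)) + C_SKL (BSC ((1 - b) / 2)) = +oo)%E.
    have [ea1|ea1] := eqVneq a 1.
      rewrite ea1 (_ : (1 - 1) / 2 = 0 :> R); last by rewrite subrr mul0r.
      rewrite C_SKL_BSC0 addye // ge0_ninf // C_SKL_BSC_ge0 //.
    have eb1 : b = 1.
      move: hab; rewrite negb_and -!leNgt => /orP[h|h]; last by apply/eqP; rewrite eq_le b1 h.
      by rewrite eq_le a1 h in ea1.
    rewrite eb1 (_ : (1 - 1) / 2 = 0 :> R); last by rewrite subrr mul0r.
    rewrite C_SKL_BSC0 addey // ge0_ninf // C_SKL_BSC_ge0 //.
  rewrite Hinf.
  have [l00|lpos] := eqVneq l 0.
    split; last by rewrite l00 ltxx.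
    rewrite LHS_val //; last by left; rewrite l00 ltr01.
    by rewrite l00 !mul0r expr0n /= mul0e.
  have lp : 0 < l by rewrite lt_def lpos l0.
  rewrite muleC gt0_mulye ?lte_fin ?exprn_gt0 //.
  split; first by rewrite leey.
  move=> /andP[_ lt1] _.
  by rewrite LHS_val //; [rewrite ltey | left].
Qed.
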